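(* Let $(\Omega,T)$ be a minimal subshift over a finite alphabet $A$ such that no word in $L_5(\Omega)$ has repeated letters. Then: (1) For every $v\in L(\Omega)$ and $i\in\mathbb Z$, the sets $(v,i),(v,i+1),(v,i+2)$ are pairwise disjoint; in particular $\sigma_{(v,i)}$ is well defined. (2) If $U$ is a clopen set such that $U,TU,T^2U$ are pairwise disjoint, then for every finite clopen partition $\mathcal C$ of $U$ we have $\sigma_U=\prod_{D\in\mathcal C}\sigma_D$, and the elements $\sigma_D$, $D\in\mathcal C$, pairwise commute. In particular, for $a,b,c\in A$, $\sigma_{[a.]}=\prod_{b,c\in A}\sigma_{[a.bc]}$ and $\sigma_{[.bc]}=\prod_{a\in A}\sigma_{[a.bc]}$. (3) For every $w=w_0\cdots w_{n-1}\in A^n$ with $n\geq 4$, $$\sigma_{[w_0|w_1\cdots w_{n-1}]}=\sigma_{[.w_0w_1]}\ast\Big(\sigma_{[.w_1w_2]}\ast\cdots\ast\big(\sigma_{[.w_{n-4}w_{n-3}]}\ast\sigma_{[w_{n-3}|w_{n-2}w_{n-1}]}\big)\cdots\Big).$$ (4) For every $w=w_0\cdots w_{n-1}\in A^n$ with $n\geq4$ and every $2\leq k\leq n-1$, $$\sigma_{[w_0\cdots w_{k-1}|w_k\cdots w_{n-1}]}=\Big(\cdots\big((\sigma_{[w_0|w_1\cdots w_{n-1}]}\ast\sigma_{[w_2.]})\ast\sigma_{[w_3.]}\big)\ast\cdots\ast\sigma_{[w_k.]}\Big).$$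
   Context: $T$ is the left shift $(T\omega)_m=\omega_{m+1}$ on $A^{\mathbb Z}$; a minimal subshift is a closed shift-invariant $\Omega\subseteq A^{\mathbb Z}$ with every orbit dense. Words are indexed from $0$; $L_m(\Omega)$ is the set of words of length $m$ occurring in sequences of $\Omega$, $L(\Omega)=\bigcup_mL_m(\Omega)$. For words $u,v$ over $A$ (either may be empty), $[u.v]=[u|v]=\{\omega\in\Omega:\ \omega_{-i}=u_{|u|-i}\ (1\leq i\leq|u|),\ \omega_i=v_i\ (0\leq i\leq|v|-1)\}$ (possibly empty). For a word $v$ and $i\in\mathbb Z$, $(v,i)=T^i[.v]$. For a clopen set $U$ with $U,TU,T^2U$ pairwise disjoint, $\sigma_U:\Omega\to\Omega$ is defined by $\sigma_U(\omega)=T\omega$ for $\omega\in U\cup TU$, $\sigma_U(\omega)=T^{-2}\omega$ for $\omega\in T^2U$, and $\sigma_U(\omega)=\omega$ otherwise; in particular $\sigma_\emptyset$ is the identity. We write $\sigma_{(v,i)}=\sigma_{T^i[.v]}$. These are elements of the group of homeomorphisms of $\Omega$. For group elements $r,s$, $r\ast s:=s\,r^{-1}s^{-1}r$ (a non-associative operation). *)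

(* Defs.v *)
From Stdlib Require Import ZArith ClassicalDescription.
From mathcomp Require Import all_boot.
Set Implicit Arguments. Unset Strict Implicit. Unset Printing Implicit Defensive.

Section SubshiftDefs.
Variable A : finType.

Definition config := Z -> A.
Definition cset := config -> Prop.

(* T^k : (T^k w)_m = w_(m+k); T = shiftn 1 is the left shift *)
Definition shiftn (k : Z) (w : config) : config := fun m => w (m + k)%Z.

(* T^k U = { T^k w | w in U } *)
Definition shiftset (k : Z) (U : cset) : cset := fun w => U (shiftn (- k) w).

Definition disj (U V : cset) : Prop := forall w, ~ (U w /\ V w).

Definition agree (n : nat) (w w' : config) : Prop :=
  forall m : Z, (- Z.of_nat n <= m <= Z.of_nat n)%Z -> w m = w' m.

Variable Om : cset.

Definition closed_set : Prop :=
  forall w, (forall n, exists w', Om w' /\ agree n w w') -> Om w.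

Definition shift_invariant : Prop :=
  forall w, Om w -> Om (shiftn 1 w) /\ Om (shiftn (-1) w).

Definition orbits_dense : Prop :=
  forall w w', Om w -> Om w' -> forall n, exists k : Z, agree n (shiftn k w) w'.

Definition minimal_subshift : Prop :=
  (exists w, Om w) /\ closed_set /\ shift_invariant /\ orbits_dense.

Definition occurs (u : seq A) : Prop :=
  exists w, Om w /\ exists j : Z,
    u = [seq w (j + Z.of_nat k)%Z | k <- iota 0 (size u)].
Definition Lang (m : nat) (u : seq A) : Prop := size u = m /\ occurs u.

Definition cyl (u v : seq A) : cset := fun w =>
  Om w /\
  u = [seq w (Z.of_nat k - Z.of_nat (size u))%Z | k <- iota 0 (size u)] /\
  v = [seq w (Z.of_nat k) | k <- iota 0 (size v)].

(* (v, i) = T^i [.v] *)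
Definition vcyl (v : seq A) (i : Z) : cset := shiftset i (cyl [::] v).

Definition open_in (U : cset) : Prop :=
  (forall w, U w -> Om w) /\
  forall w, U w -> exists n, forall w', Om w' -> agree n w w' -> U w'.
Definition closed_in (U : cset) : Prop :=
  forall w, Om w -> ~ U w -> exists n, forall w', Om w' -> agree n w w' -> ~ U w'.
Definition clopen_in (U : cset) : Prop := open_in U /\ closed_in U.

Definition clopen_partition (U : cset) (C : seq cset) : Prop :=
  (forall D, List.In D C -> clopen_in D /\ exists w, D w) /\
  (forall i j, (i < j)%N -> (j < size C)%N ->
     disj (nth (fun _ => False) C i) (nth (fun _ => False) C j)) /\
  (forall w, U w <-> exists2 D, List.In D C & D w).

End SubshiftDefs.

(* Group elements: a homeomorphism together with its inverse.
   Product is composition: (emul r s) x = r (s x). *)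
Record elt (A : finType) := Elt { fw : config A -> config A; bw : config A -> config A }.

Definition eone (A : finType) : elt A := Elt id id.
Definition emul (A : finType) (r s : elt A) : elt A :=
  Elt (fw r \o fw s) (bw s \o bw r).
Definition einv (A : finType) (r : elt A) : elt A := Elt (bw r) (fw r).

Definition star (A : finType) (r s : elt A) : elt A :=
  emul s (emul (einv r) (emul (einv s) r)).

Definition prodE (A : finType) (l : seq (elt A)) : elt A := foldr (@emul A) (eone A) l.

Definition eq_on (A : finType) (Om : cset A) (r s : elt A) : Prop :=
  forall w, Om w -> fw r w = fw s w.

Definition sigma (A : finType) (U : cset A) : elt A :=
  Elt (fun w =>
         if excluded_middle_informative (U w \/ shiftset 1 U w) then shiftn 1 w
         else if excluded_middle_informative (shiftset 2 U w) then shiftn (-2) w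
         else w)
      (fun w =>
         if excluded_middle_informative (shiftset 1 U w \/ shiftset 2 U w)
         then shiftn (-1) w
         else if excluded_middle_informative (U w) then shiftn 2 w
         else w).

(* Main.v *)
Require Import Defs.
From Stdlib Require Import ZArith Lia FunctionalExtensionality ClassicalDescription.
Set Implicit Arguments. Unset Strict Implicit. Unset Printing Implicit Defensive.



Definition kf (u : Z -> bool) (j : Z) : Z :=
  if orb (u j) (u (j-1)%Z) then 1%Z else if u (j-2)%Z then (-2)%Z else 0%Z.
Definition kb (u : Z -> bool) (j : Z) : Z :=
  if orb (u (j-1)%Z) (u (j-2)%Z) then (-1)%Z else if u j then 2%Z else 0%Z.

Ltac contra u v Hu Hv Huv :=
  match goal with
  | H1 : u ?a = true, H2 : u ?b = true |- _ =>
      assert_fails (constr_eq a b); exfalso; pose proof (Hu a b H1 H2); lia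
  | H1 : v ?a = true, H2 : v ?b = true |- _ =>
      assert_fails (constr_eq a b); exfalso; pose proof (Hv a b H1 H2); lia
  | H1 : u ?a = true, H2 : v ?b = true |- _ =>
      exfalso; pose proof (Huv a b H1 H2); lia
  end.

Ltac bits u v Hu Hv Huv :=
  unfold kf, kb; simpl;
  repeat (first [ solve [contra u v Hu Hv Huv] | reflexivity | solve [discriminate] |
   match goal with
   | |- context [u ?j] => lazymatch j with context [u _] => fail | context [v _] => fail | _ =>
        let H := fresh "H" in destruct (u j) eqn:H; simpl end
   | |- context [v ?j] => lazymatch j with context [u _] => fail | context [v _] => fail | _ =>
        let H := fresh "H" in destruct (v j) eqn:H; simpl end
   end]).

Lemma star_fw (u v : Z -> bool)
  (Hu : forall i j, u i = true -> u j = true -> i = j \/ (Z.abs (i - j) >= 3)%Z)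
  (Hv : forall i j, v i = true -> v j = true -> i = j \/ (Z.abs (i - j) >= 3)%Z)
  (Huv : forall i j, u i = true -> v j = true -> (j - i = 2)%Z \/ (Z.abs (j - i) >= 3)%Z) :
  let p1 := (0 + kf u 0)%Z in let p2 := (p1 + kb v p1)%Z in let p3 := (p2 + kb u p2)%Z in
  (p3 + kf v p3)%Z = kf (fun j => andb (u (j-1)%Z) (v (j+1)%Z)) 0%Z.
Proof. intros p1 p2 p3; subst p1 p2 p3. bits u v Hu Hv Huv. Qed.

Lemma star_bw (u v : Z -> bool)
  (Hu : forall i j, u i = true -> u j = true -> i = j \/ (Z.abs (i - j) >= 3)%Z)
  (Hv : forall i j, v i = true -> v j = true -> i = j \/ (Z.abs (i - j) >= 3)%Z)
  (Huv : forall i j, u i = true -> v j = true -> (j - i = 2)%Z \/ (Z.abs (j - i) >= 3)%Z) :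
  let q1 := (0 + kb v 0)%Z in let q2 := (q1 + kf u q1)%Z in let q3 := (q2 + kf v q2)%Z in
  (q3 + kb u q3)%Z = kb (fun j => andb (u (j-1)%Z) (v (j+1)%Z)) 0%Z.
Proof. intros q1 q2 q3; subst q1 q2 q3. bits u v Hu Hv Huv. Qed.

Lemma union_fw (u v : Z -> bool)
  (Hu : forall i j, u i = true -> u j = true -> i = j \/ (Z.abs (i - j) >= 3)%Z)
  (Hv : forall i j, v i = true -> v j = true -> i = j \/ (Z.abs (i - j) >= 3)%Z)
  (Huv : forall i j, u i = true -> v j = true -> (Z.abs (j - i) >= 3)%Z) :
  let p1 := (0 + kf u 0)%Z in (p1 + kf v p1)%Z = kf (fun j => orb (u j) (v j)) 0%Z.
Proof. intros p1; subst p1. bits u v Hu Hv Huv. Qed.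


Lemma kf_ext u v p : (forall j, u j = v j) -> kf u p = kf v p.
Proof. intro H; unfold kf; rewrite !H; reflexivity. Qed.
Lemma kb_ext u v p : (forall j, u j = v j) -> kb u p = kb v p.
Proof. intro H; unfold kb; rewrite !H; reflexivity. Qed.

From mathcomp Require Import all_boot zify.
Set Implicit Arguments. Unset Strict Implicit. Unset Printing Implicit Defensive.
Arguments sigma : simpl never.

Lemma shiftnK (A : finType) a b (w : config A) : shiftn a (shiftn b w) = shiftn (b + a) w.
Proof. apply: functional_extensionality => m; rewrite /shiftn; f_equal; lia. Qed.

Lemma shiftn0 (A : finType) (w : config A) : shiftn 0 w = w.
Proof. apply: functional_extensionality => m; rewrite /shiftn; f_equal; lia. Qed.

Lemma shiftn_eq (A : finType) a b (w : config A) : a = b -> shiftn a w = shiftn b w.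
Proof. by move->. Qed.

Lemma Om_shift (A : finType) (Om : cset A) : shift_invariant Om ->
  forall k w, Om w -> Om (shiftn k w).
Proof.
move=> HS.
have H : forall n : nat, forall w, Om w -> Om (shiftn (Z.of_nat n) w) /\ Om (shiftn (- Z.of_nat n)%Z w).
  elim=> [|n IH] w Hw; first by rewrite /= shiftn0.
  have [H1 H2] := IH w Hw.
  split.
    rewrite (_ : shiftn _ w = shiftn 1 (shiftn (Z.of_nat n) w)); first by case: (HS _ H1).
    rewrite shiftnK; apply: shiftn_eq; lia.
  rewrite (_ : shiftn _ w = shiftn (-1) (shiftn (- Z.of_nat n)%Z w)); first by case: (HS _ H2).
  rewrite shiftnK; apply: shiftn_eq; lia.
move=> k w Hw.
case: (Z.le_gt_cases 0 k) => hk.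
  rewrite -(Z2Nat.id k hk); by case: (H (Z.to_nat k) w Hw).
rewrite (_ : k = - Z.of_nat (Z.to_nat (- k)))%Z; last lia.
by case: (H (Z.to_nat (-k)) w Hw).
Qed.

Definition bit (A : finType) (U : cset A) (w : config A) (j : Z) : bool :=
  if excluded_middle_informative (U (shiftn j w)) then true else false.

Lemma bitP (A : finType) (U : cset A) w j : bit U w j = true <-> U (shiftn j w).
Proof. rewrite /bit; case: excluded_middle_informative => h; split => //. Qed.

Ltac em_cases := repeat match goal with |- context [excluded_middle_informative ?P] =>
   destruct (excluded_middle_informative P) end.

Lemma Ueq (A : finType) (U : cset A) w a b : a = b -> U (shiftn a w) = U (shiftn b w).
Proof. by move->. Qed.

Lemma fw_sigma (A : finType) (U : cset A) w p :
  fw (sigma U) (shiftn p w) = shiftn (p + kf (bit U w) p) w.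
Proof.
rewrite /sigma /= /kf /bit /shiftset !shiftnK.
rewrite (@Ueq _ U w (p + - (1))%Z (p - 1)%Z); last lia.
rewrite (@Ueq _ U w (p + - (2))%Z (p - 2)%Z); last lia.
em_cases => /=; try tauto; rewrite ?shiftnK; apply: shiftn_eq; lia.
Qed.

Lemma bw_sigma (A : finType) (U : cset A) w p :
  bw (sigma U) (shiftn p w) = shiftn (p + kb (bit U w) p) w.
Proof.
rewrite /sigma /= /kb /bit /shiftset !shiftnK.
rewrite (@Ueq _ U w (p + - (1))%Z (p - 1)%Z); last lia.
rewrite (@Ueq _ U w (p + - (2))%Z (p - 2)%Z); last lia.
em_cases => /=; try tauto; rewrite ?shiftnK; apply: shiftn_eq; lia.
Qed.

Definition eq2 (A : finType) (Om : cset A) (r s : elt A) :=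
  forall w, Om w -> fw r w = fw s w /\ bw r w = bw s w.
Definition good (A : finType) (Om : cset A) (e : elt A) :=
  forall w, Om w -> Om (fw e w) /\ Om (bw e w).

Lemma good_sigma (A : finType) (Om : cset A) U : shift_invariant Om -> good Om (sigma U).
Proof.
move=> HS w Hw; rewrite -(shiftn0 w) fw_sigma bw_sigma.
by split; apply: Om_shift.
Qed.

Lemma fw_star (A : finType) (r s : elt A) w :
  fw (star r s) w = fw s (bw r (bw s (fw r w))).
Proof. by []. Qed.
Lemma bw_star (A : finType) (r s : elt A) w :
  bw (star r s) w = bw r (fw s (fw r (bw s w))).
Proof. by []. Qed.

Lemma good_star (A : finType) (Om : cset A) r s : good Om r -> good Om s -> good Om (star r s).
Proof.
move=> Hr Hs w Hw; rewrite fw_star bw_star.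
split.
- have h1 := (Hr _ Hw).1. have h2 := (Hs _ h1).2. have h3 := (Hr _ h2).2. exact: (Hs _ h3).1.
- have h1 := (Hs _ Hw).2. have h2 := (Hr _ h1).1. have h3 := (Hs _ h2).1. exact: (Hr _ h3).2.
Qed.

Lemma star_congr (A : finType) (Om : cset A) r s r' s' :
  good Om r -> good Om s -> eq2 Om r r' -> eq2 Om s s' -> eq2 Om (star r s) (star r' s').
Proof.
move=> Hr Hs Er Es w Hw; rewrite !fw_star !bw_star.
split.
- have h1 := (Hr _ Hw).1. have h2 := (Hs _ h1).2. have h3 := (Hr _ h2).2.
  rewrite -(Er _ Hw).1 -(Es _ h1).2 -(Er _ h2).2 -(Es _ h3).1 //.
- have h1 := (Hs _ Hw).2. have h2 := (Hr _ h1).1. have h3 := (Hs _ h2).1.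
  rewrite -(Es _ Hw).2 -(Er _ h1).1 -(Es _ h2).1 -(Er _ h3).2 //.
Qed.

Lemma eq2_trans (A : finType) (Om : cset A) r s t : eq2 Om r s -> eq2 Om s t -> eq2 Om r t.
Proof. move=> H1 H2 w Hw; have [a b] := H1 _ Hw; have [c d] := H2 _ Hw; split; congruence. Qed.
Lemma eq2_sym (A : finType) (Om : cset A) r s : eq2 Om r s -> eq2 Om s r.
Proof. move=> H1 w Hw; have [a b] := H1 _ Hw; split; congruence. Qed.

Lemma sigma_ext (A : finType) (Om : cset A) (U U' : cset A) : shift_invariant Om ->
  (forall z, Om z -> (U z <-> U' z)) -> eq2 Om (sigma U) (sigma U').
Proof.
move=> HS HU w Hw.
have Hb : forall j, bit U w j = bit U' w j.
  move=> j; have Hj := Om_shift HS j Hw.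
  case E: (bit U' w j); first by apply/bitP; apply/(HU _ Hj)/bitP.
  apply/negbTE/negP => /bitP /(HU _ Hj) /bitP; by rewrite E.
rewrite -(shiftn0 w) !fw_sigma !bw_sigma (kf_ext _ Hb) (kb_ext _ Hb) //.
Qed.

Lemma star_sig (A : finType) (U V W : cset A) w :
  (forall i j, bit U w i = true -> bit U w j = true -> i = j \/ (Z.abs (i - j) >= 3)%Z) ->
  (forall i j, bit V w i = true -> bit V w j = true -> i = j \/ (Z.abs (i - j) >= 3)%Z) ->
  (forall i j, bit U w i = true -> bit V w j = true -> (j - i = 2)%Z \/ (Z.abs (j - i) >= 3)%Z) ->
  (forall j, bit W w j = andb (bit U w (j-1)%Z) (bit V w (j+1)%Z)) ->
  fw (star (sigma U) (sigma V)) w = fw (sigma W) w /\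
  bw (star (sigma U) (sigma V)) w = bw (sigma W) w.
Proof.
move=> Hu Hv Huv HW.
rewrite -(shiftn0 w) fw_star bw_star !fw_sigma !bw_sigma !fw_sigma !bw_sigma.
rewrite (kf_ext _ HW) (kb_ext _ HW).
split; apply: shiftn_eq.
- exact: (star_fw Hu Hv Huv).
- exact: (star_bw Hu Hv Huv).
Qed.

Lemma uniq5 (A : finType) (Om : cset A) :
  (forall u : seq A, Lang Om 5 u -> uniq u) ->
  forall x i j, Om x -> (0 < j - i <= 4)%Z -> x i <> x j.
Proof.
move=> H5 x i j Hx hij E.
pose s := [seq x (i + Z.of_nat k)%Z | k <- iota 0 5].
have Hs : uniq s.
  apply: H5; split; first by [].
  by exists x; split => //; exists i.
pose d := Z.to_nat (j - i).
have hd : (0 < d < 5)%N by rewrite /d; lia.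
have := nth_uniq (x i) (i:=0) (j:=d) _ _ Hs.
rewrite /s size_map size_iota => /(_ isT) /(_ (proj2 (andP hd))).
rewrite (nth_map 0%N) // (nth_map 0%N); last by rewrite size_iota; case/andP: hd.
rewrite !nth_iota //; last by case/andP: hd.
have -> : x (i + Z.of_nat (0 + 0))%Z = x i by f_equal; lia.
have -> : x (i + Z.of_nat (0 + d))%Z = x j by f_equal; rewrite /d; lia.
rewrite E eqxx => /esym /eqP; rewrite /d; lia.
Qed.

Lemma uniq5' (A : finType) (Om : cset A) :
  (forall u : seq A, Lang Om 5 u -> uniq u) ->
  forall x i j, Om x -> i <> j -> (Z.abs (i - j) <= 4)%Z -> x i <> x j.
Proof.
move=> H5 x i j Hx hij ha.
case: (Z.lt_total i j) => [h|[h|h]]; first (apply: (uniq5 H5) => //; lia).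
  by [].
move=> E; apply: (uniq5 H5 Hx (i:=j) (j:=i)); [lia | by rewrite E].
Qed.

Lemma wE (A : finType) (w : config A) a b : a = b -> w a = w b.
Proof. by move->. Qed.

Lemma bits_self (A : finType) (Om : cset A) U p a w :
  (forall u : seq A, Lang Om 5 u -> uniq u) ->
  (forall z, U z -> Om z /\ z p = a) ->
  forall i j, bit U w i = true -> bit U w j = true -> i = j \/ (Z.abs (i - j) >= 3)%Z.
Proof.
move=> H5 HU i j /bitP /HU [Hi Ei] /bitP /HU [Hj Ej].
case: (Z.eq_dec i j) => hij; first by left.
case: (Z_le_gt_dec 3 (Z.abs (i - j))) => h; first by right; lia.
exfalso; apply: (uniq5' H5 Hi (i := p) (j := (p + j - i)%Z)); first lia; first lia.
rewrite Ei -Ej /shiftn; apply: wE; lia.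
Qed.

Lemma bits_cross (A : finType) (Om : cset A) U V b w :
  (forall u : seq A, Lang Om 5 u -> uniq u) ->
  (forall z, U z -> Om z /\ z 1%Z = b) -> (forall z, V z -> Om z /\ z (-1)%Z = b) ->
  forall i j, bit U w i = true -> bit V w j = true -> (j - i = 2)%Z \/ (Z.abs (j - i) >= 3)%Z.
Proof.
move=> H5 HU HV i j /bitP /HU [Hi Ei] /bitP /HV [Hj Ej].
case: (Z.eq_dec (j - i) 2) => hij; first by left.
case: (Z_le_gt_dec 3 (Z.abs (j - i))) => h; first by right; lia.
exfalso; apply: (uniq5' H5 Hi (i := 1%Z) (j := (j - 1 - i)%Z)); first lia; first lia.
rewrite Ei -Ej /shiftn; apply: wE; lia.
Qed.

Lemma bits_disj (A : finType) (U : cset A) w :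
  disj U (shiftset 1 U) -> disj U (shiftset 2 U) ->
  forall i j, bit U w i = true -> bit U w j = true -> i = j \/ (Z.abs (i - j) >= 3)%Z.
Proof.
move=> D1 D2 i j /bitP Hi /bitP Hj.
case: (Z.eq_dec i j) => hij; first by left.
case: (Z_le_gt_dec 3 (Z.abs (i - j))) => h; first by right; lia.
exfalso.
have T : forall a b k, U (shiftn a w) -> U (shiftn b w) -> b = (a + k)%Z ->
   shiftset k U (shiftn b w).
  move=> a b k Ha Hb e; rewrite /shiftset shiftnK; congr (U _): Ha; apply: shiftn_eq; lia.
case: (Z.lt_total i j) => [hl|[//|hl]].
- case: (Z.eq_dec j (i + 1)) => e.
  + by apply: (D1 (shiftn j w)); split => //; apply: (T i j 1%Z).
  + by apply: (D2 (shiftn j w)); split => //; apply: (T i j 2%Z) => //; lia.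
- case: (Z.eq_dec i (j + 1)) => e.
  + by apply: (D1 (shiftn i w)); split => //; apply: (T j i 1%Z).
  + by apply: (D2 (shiftn i w)); split => //; apply: (T j i 2%Z) => //; lia.
Qed.

Lemma star_sig_eq2 (A : finType) (Om : cset A) (U V W : cset A) b :
  shift_invariant Om ->
  (forall u : seq A, Lang Om 5 u -> uniq u) ->
  (forall z, U z -> Om z /\ z 1%Z = b) -> (forall z, V z -> Om z /\ z (-1)%Z = b) ->
  (forall z, Om z -> (W z <-> U (shiftn (-1) z) /\ V (shiftn 1 z))) ->
  eq2 Om (star (sigma U) (sigma V)) (sigma W).
Proof.
move=> HS H5 HU HV HW w Hw.
apply: (star_sig (bits_self H5 HU) (bits_self H5 HV) (bits_cross H5 HU HV)).
  move=> j; have Hj := Om_shift HS j Hw.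
  have E1 : shiftn (-1) (shiftn j w) = shiftn (j - 1) w by rewrite shiftnK; apply: shiftn_eq; lia.
  have E2 : shiftn 1 (shiftn j w) = shiftn (j + 1) w by rewrite shiftnK; apply: shiftn_eq; lia.
  rewrite /bit; move: (HW _ Hj); rewrite E1 E2 => e.
  em_cases => //=; tauto.
Qed.

Lemma sig_union (A : finType) (V W X : cset A) w :
  (forall j, bit X w j = orb (bit W w j) (bit V w j)) ->
  (forall i j, bit X w i = true -> bit X w j = true -> i = j \/ (Z.abs (i - j) >= 3)%Z) ->
  (forall j, bit V w j = true -> bit W w j = true -> False) ->
  fw (emul (sigma V) (sigma W)) w = fw (sigma X) w.
Proof.
move=> HX Hx Hvw.
rewrite -(shiftn0 w) (_ : forall (r s : elt A) z, fw (emul r s) z = fw r (fw s z)) //.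
rewrite !fw_sigma (kf_ext _ HX); apply: shiftn_eq.
apply: union_fw.
- move=> i j hi hj; apply: Hx; by rewrite HX ?hi ?hj ?orbT.
- move=> i j hi hj; apply: Hx; by rewrite HX ?hi ?hj ?orbT.
- move=> i j hi hj.
  case: (Hx i j); [by rewrite HX hi | by rewrite HX hj orbT | move=> e | lia].
  subst; exfalso; exact: (Hvw j hj hi).
Qed.

Fixpoint PW (A : finType) (I : Type) (F : I -> cset A) (s : seq I) : Prop :=
  match s with
  | [::] => True
  | i :: s' => (forall j, List.In j s' -> disj (F i) (F j)) /\ PW F s'
  end.

Lemma bit_mono (A : finType) (U U' : cset A) w j :
  (forall z, U z -> U' z) -> bit U w j = true -> bit U' w j = true.
Proof. by move=> H /bitP /H /bitP. Qed.

Lemma bit_or (A : finType) (X U V : cset A) w j :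
  (forall z, X z <-> U z \/ V z) -> bit X w j = orb (bit U w j) (bit V w j).
Proof.
move=> H; rewrite /bit; move: (H (shiftn j w)) => e; em_cases => //=; tauto.
Qed.

Lemma fw_emul (A : finType) (r s : elt A) z : fw (emul r s) z = fw r (fw s z).
Proof. by []. Qed.

Lemma prod_sigma (A : finType) (I : Type) (F : I -> cset A) (s : seq I) :
  PW F s -> forall X : cset A,
  (forall z, X z <-> exists2 i, List.In i s & F i z) ->
  (forall w i j, bit X w i = true -> bit X w j = true -> i = j \/ (Z.abs (i - j) >= 3)%Z) ->
  forall w, fw (prodE [seq sigma (F i) | i <- s]) w = fw (sigma X) w.
Proof.
elim: s => [|i s IH].
  move=> _ X HX _ w.
  rewrite (_ : fw (prodE _) w = w) //.
  have Hb : forall j, bit X w j = (fun _ => false) j.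
    by move=> j; apply/negbTE/negP => /bitP /HX [].
  by rewrite -{2}(shiftn0 w) fw_sigma (kf_ext _ Hb) /= shiftn0.
move=> [Hd Hp] X HX Hx w.
pose Y : cset A := fun z => exists2 j, List.In j s & F j z.
have HXY : forall z, X z <-> Y z \/ F i z.
  move=> z; rewrite HX; split.
    by case=> k [<-|hk] hz; [right | left; exists k].
  by case=> [[k hk hz]|hz]; [exists k; [right|] | exists i; [left|]].
have HYX : forall z, Y z -> X z by move=> z hz; apply/HXY; left.
have HFX : forall z, F i z -> X z by move=> z hz; apply/HXY; right.
rewrite (_ : fw (prodE _) w = fw (sigma (F i)) (fw (prodE [seq sigma (F i) | i <- s]) w)) //.
rewrite (IH Hp Y) //; last first.
  move=> w' a b ha hb; apply: (Hx w'); exact: (bit_mono HYX).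
apply: sig_union.
- by move=> j; apply: bit_or.
- exact: Hx.
- move=> j /bitP h1 /bitP [k hk h2]; exact: (Hd k hk _ (conj h1 h2)).
Qed.

Lemma In_nth_ex (T : Type) (d : T) (s : seq T) x :
  List.In x s -> exists k, (k < size s)%N /\ nth d s k = x.
Proof.
elim: s => [|y s IH] //= [->|h]; first by exists 0%N.
by case: (IH h) => k [hk e]; exists k.+1.
Qed.

Lemma PW_nth (A : finType) (C : seq (cset A)) :
  (forall i j, (i < j)%N -> (j < size C)%N ->
     disj (nth (fun _ => False) C i) (nth (fun _ => False) C j)) -> PW id C.
Proof.
elim: C => [|D C IH] //= H; split.
  move=> D' /(In_nth_ex (fun _ => False)) [k [hk <-]].
  exact: (H 0%N k.+1).
apply: IH => i j hij hj; exact: (H i.+1 j.+1).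
Qed.

Lemma disj_sym (A : finType) (U V : cset A) : disj U V -> disj V U.
Proof. by move=> H w [a b]; apply: (H w). Qed.

Lemma PW_in (A : finType) (I : Type) (F : I -> cset A) (s : seq I) :
  PW F s -> forall i j, List.In i s -> List.In j s -> F i = F j \/ disj (F i) (F j).
Proof.
elim: s => [|k s IH] //= [Hd Hp] i j [<-|hi] [<-|hj]; first by left.
- by right; apply: Hd.
- by right; apply: disj_sym; apply: Hd.
- exact: IH.
Qed.

Lemma In_mem (T : eqType) (s : seq T) x : List.In x s <-> x \in s.
Proof.
elim: s => [|y s IH] //=; rewrite in_cons; split.
  by case=> [->|/IH ->]; rewrite ?eqxx ?orbT.
by case/orP => [/eqP ->|/IH]; [left|right].
Qed.

Lemma PW_uniq (A : finType) (I : eqType) (F : I -> cset A) (s : seq I) :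
  uniq s -> (forall i j, i <> j -> disj (F i) (F j)) -> PW F s.
Proof.
move=> Hu H; elim: s Hu => [|i s IH] //= /andP [hi hs]; split; last exact: IH.
move=> j /In_mem hj; apply: H => e; subst; by rewrite hj in hi.
Qed.

Lemma map_iota_eq (T : Type) (f : nat -> T) (s : seq T) d :
  s = [seq f k | k <- iota 0 (size s)] <-> (forall k, (k < size s)%N -> f k = nth d s k).
Proof.
split.
  move=> E k hk; rewrite [in RHS]E (nth_map 0%N) ?size_iota // nth_iota //.
move=> H; apply: (@eq_from_nth _ d); first by rewrite size_map size_iota.
move=> k hk; rewrite (nth_map 0%N) ?size_iota // nth_iota // add0n; symmetry; exact: H.
Qed.

Lemma cylP (A : finType) (Om : cset A) (u v : seq A) z d :
  cyl Om u v z <-> Om z /\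
    (forall k, (k < size u)%N -> z (Z.of_nat k - Z.of_nat (size u))%Z = nth d u k) /\
    (forall k, (k < size v)%N -> z (Z.of_nat k) = nth d v k).
Proof.
rewrite /cyl; split.
  case=> h1 [h2 h3]; split => //; split.
    exact/(map_iota_eq (fun k => z (Z.of_nat k - Z.of_nat (size u))%Z)).
  exact/(map_iota_eq (fun k => z (Z.of_nat k))).
case=> h1 [h2 h3]; split => //; split.
  exact/(map_iota_eq (fun k => z (Z.of_nat k - Z.of_nat (size u))%Z) u d).
exact/(map_iota_eq (fun k => z (Z.of_nat k)) v d).
Qed.

Definition Mset (A : finType) (Om : cset A) (g : nat -> A) (lo hi : nat) (p : Z) : cset A :=
  fun z => Om z /\ forall k : nat, (lo <= k < hi)%N -> z (Z.of_nat k - p)%Z = g k.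

Lemma zE (A : finType) (z : config A) a b x : z a = x -> a = b -> z b = x.
Proof. by move=> h <-. Qed.

Lemma Mgen (A : finType) (Om : cset A) (u v : seq A) (g : nat -> A) d lo hi p :
  (forall k, (k < size u)%N -> nth d u k = g (lo + k)%N) ->
  (forall k, (k < size v)%N -> nth d v k = g (lo + size u + k)%N) ->
  hi = (lo + size u + size v)%N -> p = Z.of_nat (lo + size u) ->
  forall z, cyl Om u v z <-> Mset Om g lo hi p z.
Proof.
move=> Hu Hv -> -> z; rewrite (cylP _ _ _ _ d); rewrite /Mset; split.
  case=> Hz [H1 H2]; split => // k /andP [hk1 hk2].
  case: (ltnP k (lo + size u)) => hk.
    have := H1 (k - lo)%N ltac:(lia); rewrite Hu; last lia.
    rewrite (_ : (lo + (k - lo))%N = k); last lia.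
    move=> h; apply: (zE h); lia.
  have := H2 (k - (lo + size u))%N ltac:(lia); rewrite Hv; last lia.
  rewrite (_ : (lo + size u + (k - (lo + size u)))%N = k); last lia.
  move=> h; apply: (zE h); lia.
case=> Hz H; split => //; split.
  move=> k hk; rewrite Hu //; have := H (lo + k)%N ltac:(lia).
  move=> h; apply: (zE h); lia.
move=> k hk; rewrite Hv //; have := H (lo + size u + k)%N ltac:(lia).
move=> h; apply: (zE h); lia.
Qed.

Lemma Mstep (A : finType) (Om : cset A) (g : nat -> A) lo hi h1 l2 h2 p :
  shift_invariant Om ->
  (forall k : nat, (lo <= k < hi)%N <-> (lo <= k < h1)%N \/ (l2 <= k < h2)%N) ->
  forall z, Om z -> (Mset Om g lo hi (p + 1) z <->
     Mset Om g lo h1 p (shiftn (-1) z) /\ Mset Om g l2 h2 (p + 2) (shiftn 1 z)).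
Proof.
move=> HS Hr z Hz; rewrite /Mset /shiftn; split.
  case=> _ H; split; (split; first by apply: (Om_shift HS)).
    move=> k hk; have := H k (proj2 (Hr k) (or_introl hk)).
    move=> h; apply: (zE h); lia.
  move=> k hk; have := H k (proj2 (Hr k) (or_intror hk)).
  move=> h; apply: (zE h); lia.
case=> [[_ H1] [_ H2]]; split => // k /Hr [hk|hk].
  have := H1 k hk; move=> h; apply: (zE h); lia.
have := H2 k hk; move=> h; apply: (zE h); lia.
Qed.

Lemma Mset_p (A : finType) (Om : cset A) g lo hi p p' z :
  p = p' -> Mset Om g lo hi p z -> Mset Om g lo hi p' z.
Proof. by move->. Qed.

Lemma eq2_on (A : finType) (Om : cset A) r s : eq2 Om r s -> eq_on Om r s.
Proof. by move=> H w Hw; case: (H w Hw). Qed.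

Lemma part3 (A : finType) (Om : cset A) :
  shift_invariant Om -> (forall u : seq A, Lang Om 5 u -> uniq u) ->
  forall (w : seq A) (a0 : A), (4 <= size w)%N ->
     let n := size w in
     let wi := nth a0 w in
     eq_on Om (sigma (cyl Om [:: wi 0] (drop 1 w)))
       (foldr (fun j acc => star (sigma (cyl Om [::] [:: wi j; wi j.+1])) acc)
          (sigma (cyl Om [:: wi (n - 3)] [:: wi (n - 2); wi (n - 1)]))
          (iota 0 (n - 3))).
Proof.
move=> HS H5 w a0 hn n wi.
set F := fun j acc => _.
set base := sigma (cyl Om [:: wi (n - 3)] _).
have Gd : forall m j, good Om (foldr F base (iota j m)).
  elim=> [|m IH] j; first exact: good_sigma.
  exact: (good_star (good_sigma _ HS) (IH _)).
have key : forall m j, (j + m = n - 3)%N ->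
    eq2 Om (foldr F base (iota j m)) (sigma (Mset Om wi j n (Z.of_nat j + 1))).
  elim=> [|m IH] j hj.
    apply: sigma_ext => // z Hz.
    apply: (@Mgen _ _ _ _ _ a0).
    - move=> k; rewrite ltnS leqn0 => /eqP -> /=; rewrite /wi; apply: (congr1 (nth a0 w)); rewrite /n in hj *; lia.
    - move=> k hk; have : k = 0%N \/ k = 1%N by move: hk => /=; lia.
      case=> -> /=; rewrite /wi; apply: (congr1 (nth a0 w)); rewrite /n in hj *; lia.
    - rewrite /n in hj *; rewrite /=; lia.
    - rewrite /=; lia.
  have -> : foldr F base (iota j m.+1) =
      star (sigma (cyl Om [::] [:: wi j; wi j.+1])) (foldr F base (iota j.+1 m)) by [].
  apply: (eq2_trans (s := star (sigma (Mset Om wi j j.+2 (Z.of_nat j)))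
                               (sigma (Mset Om wi j.+1 n (Z.of_nat j + 2))))).
    apply: star_congr; [exact: good_sigma | exact: Gd | | ].
      apply: sigma_ext => // z Hz; apply: (@Mgen _ _ _ _ _ a0).
      - by [].
      - move=> k hk; have : k = 0%N \/ k = 1%N by move: hk => /=; lia.
        case=> -> /=; rewrite /wi; apply: (congr1 (nth a0 w)); lia.
      - rewrite /=; lia.
      - rewrite /=; lia.
    apply: (eq2_trans (IH j.+1 ltac:(lia))).
    apply: sigma_ext => // z Hz; split; apply: Mset_p; lia.
  apply: (@star_sig_eq2 _ _ _ _ _ (wi j.+1)) => //.
  - move=> z [Hz H]; split => //; have := H j.+1 ltac:(rewrite /n in hj; lia).
    move=> h; apply: (zE h); lia.
  - move=> z [Hz H]; split => //; have := H j.+1 ltac:(rewrite /n in hj; lia).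
    move=> h; apply: (zE h); lia.
  - move=> z Hz; apply: Mstep => // k; rewrite /n in hj; lia.
apply: eq2_on; apply: eq2_sym.
apply: (eq2_trans (key (n - 3)%N 0%N ltac:(lia))).
have E : forall z, cyl Om [:: wi 0] (drop 1 w) z <-> Mset Om wi 0 n 1%Z z.
  apply: (@Mgen _ _ _ _ _ a0).
  - move=> k; rewrite ltnS leqn0 => /eqP -> /=; by [].
  - move=> k; rewrite size_drop => hk; rewrite nth_drop; by [].
  - rewrite size_drop /= /n; lia.
  - by [].
apply: sigma_ext => // z Hz; rewrite E; split; apply: Mset_p; lia.
Qed.

Lemma good_foldl (A : finType) (Om : cset A) (G : elt A -> nat -> elt A) :
  (forall acc j, good Om acc -> good Om (G acc j)) ->
  forall l acc, good Om acc -> good Om (foldl G acc l).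
Proof. move=> HG; elim=> [|x l IH] acc Ha //=; apply: IH; exact: HG. Qed.

Lemma part4 (A : finType) (Om : cset A) :
  shift_invariant Om -> (forall u : seq A, Lang Om 5 u -> uniq u) ->
  forall (w : seq A) (a0 : A) (k : nat), (4 <= size w)%N ->
     (2 <= k)%N -> (k <= size w - 1)%N ->
     let wi := nth a0 w in
     eq_on Om (sigma (cyl Om (take k w) (drop k w)))
       (foldl (fun acc j => star acc (sigma (cyl Om [:: wi j] [::])))
          (sigma (cyl Om [:: wi 0] (drop 1 w)))
          (iota 2 (k - 1))).
Proof.
move=> HS H5 w a0 k hn hk1 hk2 wi.
set G := fun acc j => _.
set base := sigma (cyl Om [:: wi 0] (drop 1 w)).
pose n := size w.
have Gd : forall m, good Om (foldl G base (iota 2 m)).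
  move=> m; apply: good_foldl; last exact: good_sigma.
  move=> acc j Ha; exact: (good_star Ha (good_sigma _ HS)).
have key : forall m, (m + 2 <= n)%N ->
    eq2 Om (foldl G base (iota 2 m)) (sigma (Mset Om wi 0 n (Z.of_nat m + 1))).
  elim=> [|m IH] hm.
    apply: sigma_ext => // z Hz.
    have E : forall z, cyl Om [:: wi 0] (drop 1 w) z <-> Mset Om wi 0 n 1%Z z.
      apply: (@Mgen _ _ _ _ _ a0).
      - move=> i; rewrite ltnS leqn0 => /eqP -> /=; by [].
      - move=> i; rewrite size_drop => hi; rewrite nth_drop; by [].
      - rewrite size_drop /= /n; lia.
      - by [].
    rewrite E; split; apply: Mset_p; lia.
  have -> : foldl G base (iota 2 m.+1) =
      star (foldl G base (iota 2 m)) (sigma (cyl Om [:: wi (2 + m)] [::])).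
    by rewrite -[m.+1]addn1 iotaD foldl_cat.
  apply: (eq2_trans (s := star (sigma (Mset Om wi 0 n (Z.of_nat m + 1)))
                               (sigma (Mset Om wi (2 + m) (3 + m) (Z.of_nat m + 1 + 2))))).
    apply: star_congr; [exact: Gd | exact: good_sigma | apply: IH; lia | ].
    apply: sigma_ext => // z Hz; apply: (@Mgen _ _ _ _ _ a0).
    - move=> i; rewrite ltnS leqn0 => /eqP -> /=; rewrite /wi; apply: (congr1 (nth a0 w)); lia.
    - by [].
    - rewrite /=; lia.
    - rewrite /=; lia.
  apply: (eq2_trans (s := sigma (Mset Om wi 0 n (Z.of_nat m + 1 + 1)))).
    apply: (@star_sig_eq2 _ _ _ _ _ (wi (m + 2))) => //.
    - move=> z [Hz H]; split => //; have := H (m + 2)%N ltac:(rewrite /n in hm *; lia).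
      move=> h; apply: (zE h); lia.
    - move=> z [Hz H]; split => //; have := H (m + 2)%N ltac:(lia).
      move=> h; apply: (zE h); lia.
    - move=> z Hz; apply: Mstep => // i; rewrite /n in hm *; lia.
  apply: sigma_ext => // z Hz; split; apply: Mset_p; lia.
apply: eq2_on; apply: eq2_sym.
apply: (eq2_trans (key (k - 1)%N ltac:(rewrite /n; lia))).
have E : forall z, cyl Om (take k w) (drop k w) z <-> Mset Om wi 0 n (Z.of_nat k) z.
  apply: (@Mgen _ _ _ _ _ a0).
  - move=> i; rewrite size_takel; last lia.
    move=> hi; rewrite nth_take //.
  - move=> i; rewrite size_drop => hi; rewrite nth_drop size_takel //; lia.
  - rewrite size_drop size_takel /n; lia.
  - rewrite size_takel; lia.
apply: sigma_ext => // z Hz; rewrite E; split; apply: Mset_p; lia.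
Qed.

Lemma part1 (A : finType) (Om : cset A) :
  (forall u : seq A, Lang Om 5 u -> uniq u) ->
  forall (v : seq A) a b, v <> [::] -> (0 < b - a <= 2)%Z ->
  disj (vcyl Om v a) (vcyl Om v b).
Proof.
move=> H5 [|c v] a b // _ hab z [h1 h2].
move: h1 h2; rewrite /vcyl /shiftset.
move=> /(cylP _ _ _ _ c) [Hx [_ Hx0]] /(cylP _ _ _ _ c) [_ [_ Hy0]].
have e1 := Hx0 0%N isT. have e2 := Hy0 0%N isT.
apply: (uniq5' H5 Hx (i := 0%Z) (j := (a - b)%Z)); [lia | lia |].
rewrite e1 -e2 /shiftn; apply: wE; lia.
Qed.

Lemma part2 (A : finType) (Om : cset A) (U : cset A) :
  disj U (shiftset 1 U) -> disj U (shiftset 2 U) ->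
  forall C : seq (cset A), clopen_partition Om U C ->
  eq_on Om (sigma U) (prodE [seq sigma D | D <- C]) /\
  (forall D D', List.In D C -> List.In D' C ->
      eq_on Om (emul (sigma D) (sigma D')) (emul (sigma D') (sigma D))).
Proof.
move=> D1 D2 C [_ [Hn Hc]].
have Hpw : PW id C := PW_nth Hn.
have Hb := bits_disj D1 D2.
split.
  move=> w _; symmetry.
  exact: (@prod_sigma _ _ (fun D => D) C Hpw U Hc (fun w => Hb w) w).
move=> D D' hD hD' w _.
case: (PW_in Hpw hD hD') => [E|Hdd].
  by have E' : D = D' := E; rewrite E'.
have HDU : forall z, D z -> U z by move=> z hz; apply/Hc; exists D.
have HD'U : forall z, D' z -> U z by move=> z hz; apply/Hc; exists D'.
pose X : cset A := fun z => D z \/ D' z.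
have HXU : forall z, X z -> U z by move=> z [h|h]; [apply: HDU | apply: HD'U].
have Hx : forall i j, bit X w i = true -> bit X w j = true -> i = j \/ (Z.abs (i - j) >= 3)%Z.
  move=> i j hi hj; apply: (Hb w); exact: (bit_mono HXU).
rewrite (@sig_union _ D D' X) //; last first.
- by move=> j /bitP h1 /bitP h2; apply: (Hdd (shiftn j w)).
- by move=> j; apply: bit_or => z; rewrite /X; tauto.
rewrite (@sig_union _ D' D X) //.
- by move=> j; apply: bit_or => z; rewrite /X; tauto.
- by move=> j /bitP h1 /bitP h2; apply: (Hdd (shiftn j w)).
Qed.

Lemma cyl1_fact (A : finType) (Om : cset A) a (v : seq A) z :
  cyl Om [:: a] v z -> Om z /\ z (-1)%Z = a.
Proof. move=> /(cylP _ _ _ _ a) [Hz [H1 _]]; split => //; exact: (H1 0%N isT). Qed.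

Lemma part2a (A : finType) (Om : cset A) :
  (forall u : seq A, Lang Om 5 u -> uniq u) ->
  forall a : A,
     eq_on Om (sigma (cyl Om [:: a] [::]))
       (prodE [seq sigma (cyl Om [:: a] [:: bc.1; bc.2]) | bc <- enum {: A * A}]).
Proof.
move=> H5 a w _; symmetry.
apply: (@prod_sigma _ _ (fun bc : A * A => cyl Om [:: a] [:: bc.1; bc.2])).
- apply: PW_uniq; first exact: enum_uniq.
  move=> [b c] [b' c'] ne z [].
  move=> /(cylP _ _ _ _ a) [_ [_ H1]] /(cylP _ _ _ _ a) [_ [_ H2]].
  apply: ne; have e0 := H1 0%N isT; have e1 := H1 1%N isT.
  have f0 := H2 0%N isT; have f1 := H2 1%N isT.
  simpl in e0, e1, f0, f1; congruence.
- move=> z; split.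
    move=> h; exists (z 0%Z, z 1%Z); first by apply/In_mem; rewrite mem_enum.
    move: h => /(cylP _ _ _ _ a) [Hz [H1 H2]]; apply/(cylP _ _ _ _ a); split => //; split => //.
    by move=> k; case: k => [|[|]].
  move=> [bc _] /(cylP _ _ _ _ a) [Hz [H1 H2]]; apply/(cylP _ _ _ _ a); split => //.
- move=> w' i j; apply: (bits_self H5 (p := (-1)%Z) (a := a)).
  exact: cyl1_fact.
Qed.

Lemma part2b (A : finType) (Om : cset A) :
  (forall u : seq A, Lang Om 5 u -> uniq u) ->
  forall b c : A,
     eq_on Om (sigma (cyl Om [::] [:: b; c]))
       (prodE [seq sigma (cyl Om [:: a] [:: b; c]) | a <- enum A]).
Proof.
move=> H5 b c w _; symmetry.
apply: (@prod_sigma _ _ (fun a : A => cyl Om [:: a] [:: b; c])).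
- apply: PW_uniq; first exact: enum_uniq.
  move=> a a' ne z [] /cyl1_fact [_ e1] /cyl1_fact [_ e2]; apply: ne; congruence.
- move=> z; split.
    move=> h; exists (z (-1)%Z); first by apply/In_mem; rewrite mem_enum.
    move: h => /(cylP _ _ _ _ b) [Hz [H1 H2]]; apply/(cylP _ _ _ _ b); split => //; split => //.
    by move=> k; case: k => [|].
  move=> [a _] /(cylP _ _ _ _ b) [Hz [H1 H2]]; apply/(cylP _ _ _ _ b); split => //.
- move=> w' i j; apply: (bits_self H5 (p := 0%Z) (a := b)).
  move=> z /(cylP _ _ _ _ b) [Hz [_ H2]]; split => //; exact: (H2 0%N isT).
Qed.

Theorem proposition3p5 (A : finType) (Om : cset A) :
  minimal_subshift Om ->
  (forall u : seq A, Lang Om 5 u -> uniq u) ->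
  (* (1) *)
  (forall (v : seq A) (i : Z), v <> [::] -> occurs Om v ->
     disj (vcyl Om v i) (vcyl Om v (i + 1)%Z) /\
     disj (vcyl Om v i) (vcyl Om v (i + 2)%Z) /\
     disj (vcyl Om v (i + 1)%Z) (vcyl Om v (i + 2)%Z)) /\
  (* (2) *)
  (forall U : cset A, clopen_in Om U ->
     disj U (shiftset 1 U) -> disj U (shiftset 2 U) ->
     disj (shiftset 1 U) (shiftset 2 U) ->
     forall C : seq (cset A), clopen_partition Om U C ->
       eq_on Om (sigma U) (prodE [seq sigma D | D <- C]) /\
       (forall D D', List.In D C -> List.In D' C ->
          eq_on Om (emul (sigma D) (sigma D')) (emul (sigma D') (sigma D)))) /\
  (forall a : A,
     eq_on Om (sigma (cyl Om [:: a] [::]))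
       (prodE [seq sigma (cyl Om [:: a] [:: bc.1; bc.2]) | bc <- enum {: A * A}])) /\
  (forall b c : A,
     eq_on Om (sigma (cyl Om [::] [:: b; c]))
       (prodE [seq sigma (cyl Om [:: a] [:: b; c]) | a <- enum A])) /\
  (* (3) *)
  (forall (w : seq A) (a0 : A), (4 <= size w)%N ->
     let n := size w in
     let wi := nth a0 w in
     eq_on Om (sigma (cyl Om [:: wi 0] (drop 1 w)))
       (foldr (fun j acc => star (sigma (cyl Om [::] [:: wi j; wi j.+1])) acc)
          (sigma (cyl Om [:: wi (n - 3)] [:: wi (n - 2); wi (n - 1)]))
          (iota 0 (n - 3)))) /\
  (* (4) *)
  (forall (w : seq A) (a0 : A) (k : nat), (4 <= size w)%N ->
     (2 <= k)%N -> (k <= size w - 1)%N ->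
     let wi := nth a0 w in
     eq_on Om (sigma (cyl Om (take k w) (drop k w)))
       (foldl (fun acc j => star acc (sigma (cyl Om [:: wi j] [::])))
          (sigma (cyl Om [:: wi 0] (drop 1 w)))
          (iota 2 (k - 1)))).
Proof.
move=> [_ [_ [HS _]]] H5.
split.
  move=> v i hv _; split; [|split]; apply: (part1 H5) => //; lia.
split.
  move=> U _ D1 D2 _ C HC; exact: part2.
split; first exact: part2a.
split; first exact: part2b.
split; first exact: part3.
exact: part4.
Qed.
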